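(* Let $\Phi=B_l$ or $C_l$ with $l\ge2$. There exist fields $K\subseteq F$ of characteristic $2$, with $F$ a finite (hence algebraic) extension of the nonperfect field $K$, and an admissible pair $(\Lambda_l,\Lambda_s)=(Q,P)$ of type $\Phi$ in $F$ with $K\subseteq Q\subseteq P\subseteq F$, such that: (1) if $\Phi=B_l$, $l\ge3$, then $P$ is not a field; (2) if $\Phi=C_l$, $l\ge3$, then $Q$ is not a field; (3) if $\Phi=B_2=C_2$, then neither $P$ nor $Q$ is a field.
   Context: Let $p=2$ for $\Phi=B_l,C_l$. An admissible pair of type $\Phi$ in a ring $R$ is a pair $\Lambda=(\Lambda_l,\Lambda_s)$ of additive subgroups of $R$ with: (AP1) $p\Lambda_s\subseteq\Lambda_l\subseteq\Lambda_s$; (AP2) $t^p\Lambda_l\subseteq\Lambda_l$ for all $t\in\Lambda_s$; (AP3) $\Lambda_s$ is a subring if $\Phi\ne B_l$; (AP4) $\Lambda_l$ is a subring if $\Phi\ne C_l$; and moreover $\Lambda_l\Lambda_s\subseteq\Lambda_s$. For $\Phi=B_2=C_2$ neither $\Lambda_l$ nor $\Lambda_s$ is required to be a subring. *)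

(* Defs.v *)
From HB Require Import structures.
From mathcomp Require Import all_boot all_order all_algebra all_field.
Set Implicit Arguments. Unset Strict Implicit. Unset Printing Implicit Defensive.
Import GRing.Theory.
Local Open Scope ring_scope.

Inductive rsType := TypeB | TypeC.

Section Defs.
Variable F : fieldType.

Definition add_subgroup (A : pred F) : Prop :=
  0 \in A /\ (forall x y, x \in A -> y \in A -> x - y \in A).

Definition is_subring (A : pred F) : Prop :=
  add_subgroup A /\ 1 \in A /\ (forall x y, x \in A -> y \in A -> x * y \in A).

Definition is_subfield (A : pred F) : Prop :=
  is_subring A /\ (forall x, x \in A -> x != 0 -> x^-1 \in A).

(* Admissible pair (Ll, Ls) of type Phi = typ_l, with p = 2.
   For l = 2 (B_2 = C_2) neither component is required to be a subring. *)
Definition admissible_pair (typ : rsType) (l : nat) (Ll Ls : pred F) : Prop :=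
  [/\ add_subgroup Ll /\ add_subgroup Ls,
      (forall x, x \in Ls -> 2%:R * x \in Ll) /\ ({subset Ll <= Ls}),
      (forall t x, t \in Ls -> x \in Ll -> t ^+ 2 * x \in Ll),
      (typ = TypeC -> (3 <= l)%N -> is_subring Ls) /\
      (typ = TypeB -> (3 <= l)%N -> is_subring Ll)
    & (forall x y, x \in Ll -> y \in Ls -> x * y \in Ls)].
End Defs.

Definition perfect_pchar (K : fieldType) (p : nat) : Prop :=
  forall x : K, exists y : K, y ^+ p = x.

(* Main.v *)
Require Import Defs.
From HB Require Import structures.
From mathcomp Require Import all_boot all_order all_algebra all_field.
From mathcomp Require Import ring.
From Stdlib Require Import ClassicalEpsilon.
Set Implicit Arguments. Unset Strict Implicit. Unset Printing Implicit Defensive.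
Import GRing.Theory.
Local Open Scope ring_scope.

Section Sq.
Variable R : comNzRingType.
Hypothesis ch : 2 \in [pchar R].

Lemma sqrD2 (a b : R) : (a + b) ^+ 2 = a ^+ 2 + b ^+ 2.
Proof. by rewrite -!(pFrobenius_autE ch) rmorphD. Qed.

Lemma sqr_sum2 n (F : 'I_n -> R) : (\sum_i F i) ^+ 2 = \sum_i F i ^+ 2.
Proof. by rewrite -(pFrobenius_autE ch) rmorph_sum. Qed.
End Sq.

Definition sqspan (M : nzRingType) n (e : 'I_n -> M) :=
  forall f : M, exists c : 'I_n -> M, f = \sum_i c i ^+ 2 * e i.
Definition sqindep (M : nzRingType) n (e : 'I_n -> M) :=
  forall c : 'I_n -> M, \sum_i c i ^+ 2 * e i = 0 -> forall i, c i = 0.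

Section PolyStep.
Variable M : fieldType.
Hypothesis ch : 2 \in [pchar M].
Let chP : 2 \in [pchar {poly M}]. Proof. by rewrite pchar_poly. Qed.

Lemma poly_span n (e : 'I_n -> M) : sqspan e -> forall p : {poly M},
  exists g h : 'I_n -> {poly M},
    p = \sum_i (g i ^+ 2 * (e i)%:P + 'X * (h i ^+ 2 * (e i)%:P)).
Proof.
move=> hs; elim/poly_ind => [|p c [g [h ->]]].
  by exists (fun=> 0), (fun=> 0); rewrite big1 // => i _; rewrite expr0n /= !mul0r mulr0 addr0.
have [d ->] := hs c.
exists (fun i => 'X * h i + (d i)%:P), g.
rewrite rmorph_sum /= mulr_suml -big_split /=; apply: eq_bigr => i _.
rewrite sqrD2 // polyCM rmorphXn /=.
ring.
Qed.

Lemma drop1K (p : {poly M}) : p`_0 = 0 -> p = drop_poly 1 p * 'X.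
Proof.
move=> h0; apply/polyP => i; rewrite coefMX; case: i => [|i] //=.
by rewrite coef_drop_poly addn1.
Qed.

Lemma poly_indep_N n (e : 'I_n -> M) : sqindep e -> forall N (g h : 'I_n -> {poly M}),
  (forall i, size (g i) <= N /\ size (h i) <= N)%N ->
  \sum_i (g i ^+ 2 * (e i)%:P + 'X * (h i ^+ 2 * (e i)%:P)) = 0 ->
  forall i, g i = 0 /\ h i = 0.
Proof.
move=> hi; elim => [|N IH] g h hs heq.
  by move=> i; have [] := hs i; rewrite !size_poly_leq0 => /eqP -> /eqP ->.
have g0 : forall i, (g i)`_0 = 0.
  apply: hi; transitivity ((0 : {poly M}).[0]); last by rewrite horner0.
  rewrite -heq horner_sum; apply: eq_bigr => i _.
  by rewrite !hornerE horner_coef0.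
have eq1 : \sum_i (h i ^+ 2 * (e i)%:P + 'X * (drop_poly 1 (g i) ^+ 2 * (e i)%:P)) = 0.
  apply/eqP; move/eqP: heq.
  have -> : \sum_i (g i ^+ 2 * (e i)%:P + 'X * (h i ^+ 2 * (e i)%:P)) = 
    (\sum_i (h i ^+ 2 * (e i)%:P + 'X * (drop_poly 1 (g i) ^+ 2 * (e i)%:P))) * 'X.
    rewrite mulr_suml; apply: eq_bigr => i _; rewrite {1}(drop1K (g0 i)); ring.
  by rewrite mulf_eq0 polyX_eq0 orbF.
have h0 : forall i, (h i)`_0 = 0.
  apply: hi; transitivity ((0 : {poly M}).[0]); last by rewrite horner0.
  rewrite -eq1 horner_sum; apply: eq_bigr => i _.
  by rewrite !hornerE horner_coef0.
have eq2 : \sum_i (drop_poly 1 (g i) ^+ 2 * (e i)%:P + 'X * (drop_poly 1 (h i) ^+ 2 * (e i)%:P)) = 0.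
  apply/eqP; move/eqP: eq1.
  have -> : \sum_i (h i ^+ 2 * (e i)%:P + 'X * (drop_poly 1 (g i) ^+ 2 * (e i)%:P)) = 
   (\sum_i (drop_poly 1 (g i) ^+ 2 * (e i)%:P + 'X * (drop_poly 1 (h i) ^+ 2 * (e i)%:P))) * 'X.
    rewrite mulr_suml; apply: eq_bigr => i _; rewrite {1}(drop1K (h0 i)); ring.
  by rewrite mulf_eq0 polyX_eq0 orbF.
have H := IH (fun i => drop_poly 1 (g i)) (fun i => drop_poly 1 (h i)).
have {}H : forall i, drop_poly 1 (g i) = 0 /\ drop_poly 1 (h i) = 0.
  apply: H eq2 => i; rewrite !size_drop_poly; have [] := hs i.
  by rewrite !leq_subLR !add1n.
move=> i; have [Hg Hh] := H i.
by rewrite (drop1K (g0 i)) (drop1K (h0 i)) Hg Hh !mul0r.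
Qed.
End PolyStep.

Local Open Scope quotient_scope.
Lemma frac_repr (R : idomainType) (x : {fraction R}) :
  exists q : R, exists p : R, q != 0 /\ x * tofrac q = tofrac p.
Proof.
elim/quotW: x => r; exists \d_r, \n_r; split; first exact: denom_ratioP.
change (FracField.mul (\pi r) (tofrac \d_r) = tofrac \n_r).
rewrite !piE /= /FracField.mulf; apply/eqmodP; rewrite /= FracField.equivfE.
by rewrite !numden_Ratio ?(oner_eq0, mulf_neq0, denom_ratioP) // !mulr1 mulrC.
Qed.
Local Close Scope quotient_scope.

Lemma common_denom (R : idomainType) m (c : 'I_m -> {fraction R}) :
  exists D : R, D != 0 /\ forall j, exists P : R, c j * tofrac D = tofrac P.
Proof.
elim: m c => [|m IH] c.
  by exists 1; split; [exact: oner_neq0 | case].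
have [D' [D'0 HD']] := IH (fun j => c (lift ord0 j)).
have [q [p [q0 hq]]] := frac_repr (c ord0).
exists (D' * q); split; first by rewrite mulf_neq0.
move=> j; case: (unliftP ord0 j) => [j'|] ->.
  have [P hP] := HD' j'; exists (P * q).
  by rewrite rmorphM mulrA hP rmorphM.
by exists (p * D'); rewrite rmorphM mulrCA hq rmorphM mulrC.
Qed.

Section FracStep.
Variable M : fieldType.
Hypothesis ch : 2 \in [pchar M].
Local Notation L := {fraction {poly M}}.
Let chP : 2 \in [pchar {poly M}]. Proof. by rewrite pchar_poly. Qed.
Lemma chL : 2 \in [pchar L].
Proof. exact: (rmorph_pchar (@tofrac {poly M}) chP). Qed.

Definition embF (a : M) : L := tofrac (a%:P).
Definition xF : L := tofrac 'X.
Definition ext_basis n (e : 'I_n -> M) : 'I_(n+n) -> L := fun j =>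
  match split j with inl i => embF (e i) | inr i => embF (e i) * xF end.

Lemma split_l n m (i : 'I_n) : split (lshift m i) = inl i.
Proof. exact: (unsplitK (inl _ i)). Qed.
Lemma split_r n m (i : 'I_m) : split (rshift n i) = inr i.
Proof. exact: (unsplitK (inr _ i)). Qed.

Lemma divsq (a E q : L) : q != 0 -> (a / q) ^+ 2 * E * q ^+ 2 = a ^+ 2 * E.
Proof. move=> q0; rewrite expr_div_n mulrAC divfK; first by []. exact: expf_neq0. Qed.

Lemma ext_span n (e : 'I_n -> M) : sqspan e -> sqspan (ext_basis e).
Proof.
move=> hs f; have [q [p [q0 hf]]] := frac_repr f.
have [g [h hr]] := poly_span ch hs (p * q).
have qF0 : tofrac q != 0 :> L by rewrite tofrac_eq0.
exists (fun j => match split j with inl i => tofrac (g i) / tofrac q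
   | inr i => tofrac (h i) / tofrac q end).
rewrite big_split_ord /=.
apply: (mulIf (expf_neq0 2 qF0)).
have -> : f * tofrac q ^+ 2 = tofrac (p * q) by rewrite tofracM -hf; ring.
rewrite hr rmorph_sum mulrDl !mulr_suml -big_split /=; apply: eq_bigr => i _.
rewrite /ext_basis split_l split_r /embF /xF tofracD !tofracM !divsq //.
ring.
Qed.

Lemma ext_indep n (e : 'I_n -> M) : sqindep e -> sqindep (ext_basis e).
Proof.
move=> hi c hc.
have [D [D0 hD]] := common_denom c.
have [P hP] := fin_all_exists hD.
have DF0 : tofrac D != 0 :> L by rewrite tofrac_eq0.
pose N := (\max_j size (P j))%N.
have hpol : \sum_i ((P (lshift n i)) ^+ 2 * (e i)%:P + 'X * ((P (rshift n i)) ^+ 2 * (e i)%:P)) = 0.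
  apply/eqP; rewrite -tofrac_eq0; apply/eqP.
  transitivity ((\sum_j c j ^+ 2 * ext_basis e j) * tofrac D ^+ 2); last by rewrite hc mul0r.
  rewrite big_split_ord /= mulrDl !mulr_suml rmorph_sum -big_split /=; apply: eq_bigr => i _.
  rewrite /ext_basis split_l split_r /embF /xF tofracD !tofracM -!hP.
  ring.
have H := poly_indep_N hi (N := N) (g := fun i => P (lshift n i)) (h := fun i => P (rshift n i)).
have {}H : forall i, P (lshift n i) = 0 /\ P (rshift n i) = 0.
  by apply: H hpol => i; rewrite !leq_bigmax.
move=> j; have : c j * tofrac D = 0.
  rewrite hP; case: (split_ordP j) => i ->; have [h1 h2] := H i.
    by rewrite h1 tofrac0.
  by rewrite h2 tofrac0.
by move/eqP; rewrite mulf_eq0 (negbTE DF0) orbF => /eqP.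
Qed.
End FracStep.

Section Frob.
Variable L : fieldType.
Hypothesis ch : 2 \in [pchar L].
Variable n : nat.
Variable e : 'I_n -> L.
Hypothesis hs : sqspan e.
Hypothesis hi : sqindep e.

Definition FT : Type := L.
HB.instance Definition _ := GRing.Field.on FT.

Definition fscale (a : L) (v : FT) : FT := (a ^+ 2 : L) * (v : L).

Fact fscaleA a b v : fscale a (fscale b v) = fscale (a * b) v.
Proof. by rewrite /fscale exprMn mulrA. Qed.
Fact fscale1 v : fscale 1 v = v.
Proof. by rewrite /fscale expr1n mul1r. Qed.
Fact fscaleDr a u v : fscale a (u + v) = fscale a u + fscale a v.
Proof. by rewrite /fscale mulrDr. Qed.
Fact fscaleDl v a b : fscale (a + b) v = fscale a v + fscale b v.
Proof. by rewrite /fscale sqrD2 // mulrDl. Qed.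

HB.instance Definition _ := GRing.Zmodule_isLmodule.Build L FT
  fscaleA fscale1 fscaleDr fscaleDl.

Fact fscaleAl a (u v : FT) : fscale a (u * v) = fscale a u * v.
Proof. by rewrite /fscale mulrA. Qed.
HB.instance Definition _ := GRing.Lmodule_isLalgebra.Build L FT fscaleAl.
Fact fscaleAr a (u v : FT) : fscale a (u * v) = u * fscale a v.
Proof. by rewrite /fscale mulrCA. Qed.
HB.instance Definition _ := GRing.Lalgebra_isAlgebra.Build L FT fscaleAr.

Lemma sq_uniq (r s : 'I_n -> L) :
  \sum_i r i ^+ 2 * e i = \sum_i s i ^+ 2 * e i -> forall i, r i = s i.
Proof.
move=> h i; apply/eqP; rewrite -subr_eq0; apply/eqP; move: i; apply: hi.
transitivity (\sum_i r i ^+ 2 * e i - \sum_i s i ^+ 2 * e i); last by rewrite h subrr.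
rewrite -sumrB; apply: eq_bigr => i _.
by rewrite !(GRing.subr_pchar2 ch) sqrD2 // mulrDl.
Qed.

Lemma hs' (f : FT) : exists r : 'rV[L]_n, (f : L) = \sum_i r 0 i ^+ 2 * e i.
Proof. by have [c hc] := hs f; exists (\row_i c i); rewrite hc; apply: eq_bigr => i _; rewrite mxE. Qed.

Definition v2r (f : FT) : 'rV[L]_n := proj1_sig (constructive_indefinite_description _ (hs' f)).
Definition r2v (r : 'rV[L]_n) : FT := \sum_i r 0 i ^+ 2 * e i.

Lemma v2rK : cancel v2r r2v.
Proof. by move=> f; rewrite /r2v /v2r -(proj2_sig (constructive_indefinite_description _ (hs' f))). Qed.

Lemma r2vK : cancel r2v v2r.
Proof.
move=> r; apply/rowP => i; rewrite /v2r.
have := proj2_sig (constructive_indefinite_description _ (hs' (r2v r))); rewrite /r2v => h.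
by rewrite (sq_uniq h).
Qed.

Lemma v2r_lin : linear v2r.
Proof.
move=> a u v; apply: (can_inj r2vK); rewrite v2rK /r2v.
under eq_bigr do rewrite !mxE.
rewrite -[u in LHS]v2rK -[v in LHS]v2rK /r2v.
change (a ^+ 2 * (\sum_i v2r u 0 i ^+ 2 * e i) + \sum_i v2r v 0 i ^+ 2 * e i =
  \sum_i (a * v2r u 0 i + v2r v 0 i) ^+ 2 * e i).
rewrite mulr_sumr -big_split; apply: eq_bigr => i _.
by rewrite sqrD2 // exprMn mulrDl mulrA.
Qed.

HB.instance Definition _ := Lmodule_hasFinDim.Build L FT
  (exist2 _ _ v2r v2r_lin (Bijective v2rK r2vK)).

Definition FTe : fieldExtType L := FT.
End Frob.

Definition pairf (S : Type) n (c1 c2 : 'I_n -> S) (j : 'I_(n + n)) : S :=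
  match split j with inl i => c1 i | inr i => c2 i end.

Lemma pairf_l S n (c1 c2 : 'I_n -> S) i : pairf c1 c2 (lshift n i) = c1 i.
Proof. by rewrite /pairf split_l. Qed.
Lemma pairf_r S n (c1 c2 : 'I_n -> S) i : pairf c1 c2 (rshift n i) = c2 i.
Proof. by rewrite /pairf split_r. Qed.

Section SumPair.
Variable M : fieldType.
Local Notation L := {fraction {poly M}}.
Variable S : comNzRingType.
Variable phi : L -> S.
Hypothesis phiM : forall a b, phi (a * b) = phi a * phi b.

Lemma sum_pair n (e : 'I_n -> M) (c1 c2 : 'I_n -> S) :
  \sum_j (pairf c1 c2 j) ^+ 2 * phi (ext_basis e j) =
  \sum_i c1 i ^+ 2 * phi (embF (e i)) + (\sum_i c2 i ^+ 2 * phi (embF (e i))) * phi (xF M).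
Proof.
rewrite big_split_ord /= mulr_suml; congr (_ + _); apply: eq_bigr => i _.
  by rewrite pairf_l /ext_basis split_l.
by rewrite pairf_r /ext_basis split_r phiM mulrA.
Qed.

Lemma indep_lift n (e : 'I_n -> M) :
  sqindep (fun j => phi (ext_basis e j)) -> sqindep (fun i => phi (embF (e i))).
Proof.
move=> h c hc i; have := h (pairf c (fun=> 0)); rewrite sum_pair hc add0r.
rewrite big1 ?mul0r; last by move=> k _; rewrite expr0n /= mul0r.
by move=> /(_ erefl (lshift n i)); rewrite pairf_l.
Qed.
End SumPair.

Section SpanSet.
Variable S : comNzRingType.
Hypothesis chS : 2 \in [pchar S].
Variable n : nat.
Variable v : 'I_n -> S.

Definition SP (sup : pred 'I_n) (f : S) : Prop :=
  exists k : 'I_n -> S, (forall i, ~~ sup i -> k i = 0) /\ f = \sum_i k i ^+ 2 * v i.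

Lemma SP0 sup : SP sup 0.
Proof.
exists (fun=> 0); split => // ; rewrite big1 // => i _; rewrite expr0n /= mul0r //.
Qed.

Lemma SPD sup f g : SP sup f -> SP sup g -> SP sup (f + g).
Proof.
move=> [k [hk ->]] [k' [hk' ->]]; exists (fun i => k i + k' i); split.
  by move=> i hi; rewrite hk // hk' // addr0.
by rewrite -big_split; apply: eq_bigr => i _; rewrite sqrD2 // mulrDl.
Qed.

Lemma SPB sup f g : SP sup f -> SP sup g -> SP sup (f - g).
Proof. by rewrite (GRing.subr_pchar2 chS); apply: SPD. Qed.

Lemma SPZ sup t f : SP sup f -> SP sup (t ^+ 2 * f).
Proof.
move=> [k [hk ->]]; exists (fun i => t * k i); split.
  by move=> i hi; rewrite hk // mulr0.
by rewrite mulr_sumr; apply: eq_bigr => i _; rewrite exprMn mulrA.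
Qed.

Lemma SPsub (s1 s2 : pred 'I_n) f : (forall i, s1 i -> s2 i) -> SP s1 f -> SP s2 f.
Proof.
move=> h [k [hk ->]]; exists k; split => // i hi; apply: hk.
by apply/negP => /h; apply/negP.
Qed.

Definition delta (i0 : 'I_n) (a : S) : 'I_n -> S := fun i => if i == i0 then a else 0.

Lemma sum_delta i0 a : \sum_i (delta i0 a i) ^+ 2 * v i = a ^+ 2 * v i0.
Proof.
rewrite (bigD1 i0) //= big1 ?addr0 /delta ?eqxx // => i /negbTE ->.
by rewrite expr0n /= mul0r.
Qed.

Lemma SP_delta (sup : pred 'I_n) i0 a : sup i0 -> SP sup (a ^+ 2 * v i0).
Proof.
move=> h; exists (delta i0 a); split; last by rewrite sum_delta.
by move=> i hi; rewrite /delta; case: eqP => // ei; rewrite ei h in hi.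
Qed.

Lemma SP_indep (sup : pred 'I_n) i0 : sqindep v -> ~~ sup i0 -> ~ SP sup (v i0).
Proof.
move=> hv hs [k [hk heq]].
have := hv (fun i => k i + delta i0 1 i).
have -> : \sum_i (k i + delta i0 1 i) ^+ 2 * v i = 0.
  transitivity (\sum_i k i ^+ 2 * v i + \sum_i (delta i0 1 i) ^+ 2 * v i).
    by rewrite -big_split /=; apply: eq_bigr => i _; rewrite sqrD2 // mulrDl.
  by rewrite sum_delta expr1n mul1r -heq addrr_pchar2.
move=> /(_ erefl i0); rewrite hk // add0r /delta eqxx => /eqP; rewrite oner_eq0.
done.
Qed.
End SpanSet.

Section SpanMul.
Variables (M S : comNzRingType).
Hypothesis chS : 2 \in [pchar S].
Variable iota : {rmorphism M -> S}.
Variable n : nat.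
Variable e : 'I_n -> M.
Hypothesis hs : sqspan e.

Lemma SP_iota (y : M) : SP (fun i => iota (e i)) predT (iota y).
Proof.
have [c ->] := hs y; exists (fun i => iota (c i)); split => //.
by rewrite rmorph_sum; apply: eq_bigr => i _; rewrite rmorphM rmorphXn.
Qed.

Lemma SP_mul f g : SP (fun i => iota (e i)) predT f -> SP (fun i => iota (e i)) predT g ->
  SP (fun i => iota (e i)) predT (f * g).
Proof.
move=> [k [_ ->]] [k' [_ ->]].
have hC : forall ij : 'I_n * 'I_n, exists c : 'I_n -> M, e ij.1 * e ij.2 = \sum_l c l ^+ 2 * e l.
  by move=> ij; apply: hs.
have [C hC'] := fin_all_exists hC.
exists (fun l => \sum_i \sum_j k i * k' j * iota (C (i, j) l)); split => //.
transitivity (\sum_i \sum_j \sum_l (k i * k' j * iota (C (i, j) l)) ^+ 2 * iota (e l)).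
  rewrite mulr_suml; apply: eq_bigr => i _; rewrite mulr_sumr; apply: eq_bigr => j _.
  rewrite mulrACA -exprMn -rmorphM (hC' (i, j)) /= rmorph_sum mulr_sumr.
  by apply: eq_bigr => l _; rewrite rmorphM rmorphXn !exprMn !mulrA.
symmetry.
under eq_bigr => l _ do rewrite (sqr_sum2 chS) mulr_suml.
under eq_bigr => l _ do under eq_bigr => i _ do rewrite (sqr_sum2 chS) mulr_suml.
rewrite exchange_big /=; apply: eq_bigr => i _; exact: exchange_big.
Qed.
End SpanMul.

Definition toB (P : Prop) : bool := if excluded_middle_informative P then true else false.
Lemma toBP (P : Prop) : toB P <-> P.
Proof. by rewrite /toB; case: excluded_middle_informative. Qed.

Definition bp (S : Type) (R : S -> Prop) : pred S := fun f => toB (R f).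
Lemma bpP (S : Type) (R : S -> Prop) x : x \in bp R <-> R x.
Proof. exact: toBP. Qed.

Definition ix0 : 'I_((1+1)+(1+1)) := lshift _ (lshift _ ord0).
Definition ix1 : 'I_((1+1)+(1+1)) := lshift _ (rshift _ ord0).
Definition ix2 : 'I_((1+1)+(1+1)) := rshift _ (lshift _ ord0).
Definition ix3 : 'I_((1+1)+(1+1)) := rshift _ (rshift _ ord0).

Section Abs.
Variable S : fieldType.
Hypothesis chS : 2 \in [pchar S].
Variable m : 'I_((1+1)+(1+1)) -> S.
Variables x3 x4 : S.
Hypothesis hm0 : m ix0 = 1.
Hypothesis hm123 : m ix1 * m ix2 = m ix3.
Hypothesis hquad : forall c1 c2 c3 c4 : 'I_((1+1)+(1+1)) -> S,
  (\sum_i c1 i ^+ 2 * m i + (\sum_i c2 i ^+ 2 * m i) * x3) +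
  (\sum_i c3 i ^+ 2 * m i + (\sum_i c4 i ^+ 2 * m i) * x3) * x4 = 0 ->
  forall i, [/\ c1 i = 0, c2 i = 0, c3 i = 0 & c4 i = 0].
Hypothesis hEmul : forall f g, SP m predT f -> SP m predT g -> SP m predT (f * g).

Let sum0 : \sum_(i < (1+1)+(1+1)) (fun=> (0 : S)) i ^+ 2 * m i = 0.
Proof. by rewrite big1 // => i _; rewrite expr0n /= mul0r. Qed.

Lemma m_indepA : sqindep m.
Proof.
move=> c hc i; have := hquad (c1 := c) (c2 := fun=> 0) (c3 := fun=> 0) (c4 := fun=> 0).
by rewrite hc !sum0 !(mul0r, addr0) => /(_ erefl i) [].
Qed.

Lemma x4_not_sqA : ~ exists y : S, y ^+ 2 = x4.
Proof.
move=> [y hy].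
have := hquad (c1 := delta ix0 y) (c2 := fun=> 0) (c3 := delta ix0 1) (c4 := fun=> 0).
rewrite !sum_delta hm0 sum0 expr1n !(mulr1, mul0r, addr0, mul1r) hy addrr_pchar2 //.
by move=> /(_ erefl ix0) [_ _]; rewrite /delta eqxx => /eqP; rewrite oner_eq0.
Qed.

Definition Eset (f : S) := SP m predT f.
Definition Qset (f : S) := SP m (fun i => i != ix3) f.
Definition Pset (f : S) :=
  exists a b c, [/\ Eset a, Eset b, Eset c & f = a + b * x3 + c * x4].
Definition Kset (f : S) := exists y, f = y ^+ 2.

Lemma x34_notP : ~ Pset (x3 * x4).
Proof.
move=> [a [b [c [[ka [_ ea]] [kb [_ eb]] [kc [_ ec]] hf]]]].
have := hquad (c1 := ka) (c2 := kb) (c3 := kc) (c4 := delta ix0 1).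
rewrite sum_delta hm0 expr1n !(mulr1, mul1r) -ea -eb -ec.
have -> : a + b * x3 + (c + x3) * x4 = (a + b * x3 + c * x4) + x3 * x4 by ring.
rewrite -hf addrr_pchar2 //.
by move=> /(_ erefl ix0) [_ _ _]; rewrite /delta eqxx => /eqP; rewrite oner_eq0.
Qed.

Lemma m3_notQ : ~ Qset (m ix3).
Proof. by apply: SP_indep; [exact: chS | exact: m_indepA | rewrite eqxx]. Qed.

Lemma Q_sq y : Qset (y ^+ 2).
Proof. by move: (@SP_delta _ _ m (fun i => i != ix3) ix0 y isT); rewrite hm0 mulr1. Qed.

Lemma Q_m1 : Qset (m ix1).
Proof. by move: (@SP_delta _ _ m (fun i => i != ix3) ix1 1 isT); rewrite expr1n mul1r. Qed.
Lemma Q_m2 : Qset (m ix2).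
Proof. by move: (@SP_delta _ _ m (fun i => i != ix3) ix2 1 isT); rewrite expr1n mul1r. Qed.

Lemma QE f : Qset f -> Eset f.
Proof. exact: SPsub. Qed.

Lemma E1 : Eset 1.
Proof. by move: (@SP_delta _ _ m predT ix0 1 isT); rewrite hm0 expr1n mulr1. Qed.

Lemma EP f : Eset f -> Pset f.
Proof.
move=> h; exists f, 0, 0; split => //; try exact: SP0.
by rewrite !mul0r !addr0.
Qed.

Lemma P_x3 : Pset x3.
Proof. exists 0, 1, 0; split; rewrite ?mul1r ?mul0r ?add0r ?addr0 //; (exact: SP0 || exact: E1). Qed.
Lemma P_x4 : Pset x4.
Proof. exists 0, 0, 1; split; rewrite ?mul1r ?mul0r ?add0r //; (exact: SP0 || exact: E1). Qed.

Lemma P0 : Pset 0.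
Proof. by apply: EP; apply: SP0. Qed.

Lemma PB f g : Pset f -> Pset g -> Pset (f - g).
Proof.
move=> [a [b [c [ha hb hc ->]]]] [a' [b' [c' [ha' hb' hc' ->]]]].
exists (a - a'), (b - b'), (c - c'); split; try exact: SPB.
ring.
Qed.

Lemma QP_mul q f : Qset q -> Pset f -> Pset (q * f).
Proof.
move=> /QE hq [a [b [c [ha hb hc ->]]]].
exists (q * a), (q * b), (q * c); split; try exact: hEmul.
ring.
Qed.

Lemma K_sub f g : Kset f -> Kset g -> Kset (f - g).
Proof.
move=> [y ->] [z ->]; exists (y + z).
by rewrite (GRing.subr_pchar2 chS) sqrD2.
Qed.

Lemma two_mul (x : S) : 2%:R * x = 0.
Proof. by rewrite (pcharf0 chS) mul0r. Qed.

Lemma not_subfield (A : pred S) a b : a \in A -> b \in A -> ~ (a * b \in A) ->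
  ~ is_subfield A.
Proof. by move=> ha hb hab [[_ [_ hM]] _]; apply: hab; apply: hM. Qed.

Theorem main_abs (typ : rsType) (l : nat) (hl : (2 <= l)%N) :
  exists Q P : pred S,
    [/\ admissible_pair typ l Q P,
        (forall y : S, y ^+ 2 \in Q) /\ ({subset Q <= P}),
        (typ = TypeB -> (3 <= l)%N -> ~ is_subfield P) /\
        (typ = TypeC -> (3 <= l)%N -> ~ is_subfield Q)
      & (l = 2%N -> ~ is_subfield P /\ ~ is_subfield Q)].
Proof.
have notQ : ~ is_subfield (bp Qset).
  by apply: (not_subfield (a := m ix1) (b := m ix2)); rewrite ?bpP ?hm123;
    [exact: Q_m1 | exact: Q_m2 | exact: m3_notQ].
have notP : ~ is_subfield (bp Pset).
  by apply: (not_subfield (a := x3) (b := x4)); rewrite ?bpP;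
    [exact: P_x3 | exact: P_x4 | exact: x34_notP].
have [->|l3] := eqVneq l 2%N.
  exists (bp Qset), (bp Pset); split.
  - split.
    + split; split.
      * by apply/bpP; apply: SP0.
      * by move=> x y /bpP hx /bpP hy; apply/bpP; apply: SPB.
      * by apply/bpP; apply: P0.
      * by move=> x y /bpP hx /bpP hy; apply/bpP; apply: PB.
    + split; first by move=> x _; rewrite two_mul; apply/bpP; apply: SP0.
      by move=> x /bpP hx; apply/bpP; apply: EP; apply: QE.
    + by move=> t x _ /bpP hx; apply/bpP; apply: SPZ.
    + by split.
    + by move=> x y /bpP hx /bpP hy; apply/bpP; apply: QP_mul.
  - by split=> [y|x /bpP hx]; apply/bpP; [exact: Q_sq | apply: EP; apply: QE].
  - by split.
  - by move=> _; split.
have {l3 hl} l3 : (3 <= l)%N by rewrite ltn_neqAle eq_sym l3 hl.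
have l2 : l <> 2%N by move=> l2; rewrite l2 in l3.
case: typ.
  exists (bp Kset), (bp Qset); split.
  - split.
    + split; split.
      * by apply/bpP; exists 0; rewrite expr0n.
      * by move=> x y /bpP hx /bpP hy; apply/bpP; apply: K_sub.
      * by apply/bpP; apply: SP0.
      * by move=> x y /bpP hx /bpP hy; apply/bpP; apply: SPB.
    + split; first by move=> x _; rewrite two_mul; apply/bpP; exists 0; rewrite expr0n.
      by move=> x /bpP [y ->]; apply/bpP; apply: Q_sq.
    + by move=> t x _ /bpP [y ->]; apply/bpP; exists (t * y); rewrite exprMn.
    + split => // _ _; split; last split.
      * split; first by apply/bpP; exists 0; rewrite expr0n.
        by move=> x y /bpP hx /bpP hy; apply/bpP; apply: K_sub.
      * by apply/bpP; exists 1; rewrite expr1n.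
      * by move=> x y /bpP [a ->] /bpP [b ->]; apply/bpP; exists (a * b); rewrite exprMn.
    + by move=> x y /bpP [a ->] /bpP hy; apply/bpP; apply: SPZ.
  - split=> [y|x /bpP [y ->]]; apply/bpP; first by exists y.
    exact: Q_sq.
  - by split => // _ _.
  - by [].
exists (bp Qset), (bp (fun _ => True)); split.
- split.
  + split; split.
    * by apply/bpP; apply: SP0.
    * by move=> x y /bpP hx /bpP hy; apply/bpP; apply: SPB.
    * by apply/bpP.
    * by move=> x y _ _; apply/bpP.
  + split; first by move=> x _; rewrite two_mul; apply/bpP; apply: SP0.
    by move=> x _; apply/bpP.
  + by move=> t x _ /bpP hx; apply/bpP; apply: SPZ.
  + split => // _ _; split; last split.
    * by split; [apply/bpP | move=> x y _ _; apply/bpP].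
    * by apply/bpP.
    * by move=> x y _ _; apply/bpP.
  + by move=> x y _ _; apply/bpP.
- by split=> [y|x _]; apply/bpP; [exact: Q_sq | ].
- by split => // _ _.
- by [].
Qed.
End Abs.

Definition extb (S : nzRingType) n (v : 'I_n -> S) (x : S) : 'I_(n + n) -> S :=
  pairf v (fun i => v i * x).

Lemma sum_pairG (S T : comNzRingType) (phi : S -> T)
  (phiM : forall a b, phi (a * b) = phi a * phi b) n (v : 'I_n -> S) (x : S)
  (c1 c2 : 'I_n -> T) :
  \sum_j (pairf c1 c2 j) ^+ 2 * phi (extb v x j) =
  \sum_i c1 i ^+ 2 * phi (v i) + (\sum_i c2 i ^+ 2 * phi (v i)) * phi x.
Proof.
rewrite big_split_ord /= mulr_suml; congr (_ + _); apply: eq_bigr => i _.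
  by rewrite pairf_l /extb pairf_l.
by rewrite pairf_r /extb pairf_r phiM mulrA.
Qed.

Lemma step (M : fieldType) (ch : 2 \in [pchar M]) n (e : 'I_n -> M) :
  sqspan e -> sqindep e ->
  exists (L : fieldType) (emb : {rmorphism M -> L}) (x : L),
    [/\ 2 \in [pchar L], sqspan (extb (fun i => emb (e i)) x)
      & sqindep (extb (fun i => emb (e i)) x)].
Proof.
move=> hs hi; exists {fraction {poly M}}, ((@tofrac _) \o polyC), (xF M).
have E : extb (fun i => ((@tofrac _) \o polyC) (e i)) (xF M) = ext_basis e by [].
rewrite E; split; [exact: chL ch | | exact: ext_indep hi]. exact (ext_span ch hs).
Qed.

Lemma B2_facts (L0 L1 L2 : fieldType) (emb1 : {rmorphism L0 -> L1})
  (emb2 : {rmorphism L1 -> L2}) y1 y2 (e0 : 'I_1 -> L0) (h : e0 ord0 = 1) :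
  let B2 := extb (fun i => emb2 (extb (fun i => emb1 (e0 i)) y1 i)) y2 in
  B2 ix0 = 1 /\ B2 ix1 * B2 ix2 = B2 ix3.
Proof.
rewrite /= /extb /ix0 /ix1 /ix2 /ix3 !(pairf_l, pairf_r) h !rmorph1.
by rewrite !mul1r; split.
Qed.

Lemma quad_from_tower (L2 L3 L4 : fieldType) (emb3 : {rmorphism L2 -> L3})
  (emb4 : {rmorphism L3 -> L4}) (y3 : L3) (y4 : L4) (B2 : 'I_((1+1)+(1+1)) -> L2)
  (hi : sqindep (extb (fun i => emb4 (extb (fun i => emb3 (B2 i)) y3 i)) y4)) :
  forall c1 c2 c3 c4 : 'I_((1+1)+(1+1)) -> L4,
  (\sum_i c1 i ^+ 2 * emb4 (emb3 (B2 i)) + (\sum_i c2 i ^+ 2 * emb4 (emb3 (B2 i))) * emb4 y3) +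
  (\sum_i c3 i ^+ 2 * emb4 (emb3 (B2 i)) + (\sum_i c4 i ^+ 2 * emb4 (emb3 (B2 i))) * emb4 y3) * y4 = 0 ->
  forall i, [/\ c1 i = 0, c2 i = 0, c3 i = 0 & c4 i = 0].
Proof.
move=> c1 c2 c3 c4 h i.
have := hi (pairf (pairf c1 c2) (pairf c3 c4)).
rewrite (@sum_pairG L4 L4 id (fun _ _ => erefl)) /=.
rewrite !(@sum_pairG L3 L4 emb4 (@rmorphM _ _ emb4)) h => /(_ erefl) H; split.
- by have := H (lshift _ (lshift _ i)); rewrite !pairf_l.
- by have := H (lshift _ (rshift _ i)); rewrite pairf_l pairf_r.
- by have := H (rshift _ (lshift _ i)); rewrite pairf_r pairf_l.
- by have := H (rshift _ (rshift _ i)); rewrite !pairf_r.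
Qed.

Theorem proposition7p1 (typ : rsType) (l : nat) (hl : (2 <= l)%N) :
  exists (K : fieldType) (F : fieldExtType K) (Q P : pred F),
    [/\ (2%N \in [pchar K]) /\ ~ perfect_pchar K 2,
        admissible_pair typ l Q P,
        (forall k : K, k%:A \in Q) /\ ({subset Q <= P}),
        (typ = TypeB -> (3 <= l)%N -> ~ is_subfield P) /\
        (typ = TypeC -> (3 <= l)%N -> ~ is_subfield Q)
      & (l = 2%N -> ~ is_subfield P /\ ~ is_subfield Q)].
Proof.
have ch0 : 2 \in [pchar 'F_2] by exact: pchar_Fp.
pose e0 : 'I_1 -> 'F_2 := fun _ => 1.
have span0 : sqspan e0.
  move=> a; exists (fun _ => a); rewrite big_ord1 /e0 mulr1.
  by rewrite -[X in X = _](expf_card a) card_Fp.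
have indep0 : sqindep e0.
  move=> c; rewrite big_ord1 /e0 mulr1 => /eqP; rewrite expf_eq0 /= => /eqP h i.
  by rewrite (ord1 i).
have [L1 [emb1 [y1 [c1 s1 i1]]]] := step ch0 span0 indep0.
have [L2 [emb2 [y2 [c2 s2 i2]]]] := step c1 s1 i1.
have [L3 [emb3 [y3 [c3 s3 i3]]]] := step c2 s2 i2.
have [L4 [emb4 [y4 [c4 s4 i4]]]] := step c3 s3 i3.
have [hB0 hB123] := B2_facts emb1 emb2 y1 y2 (e0 := e0) erefl.
pose B2 := extb (fun i => emb2 (extb (fun i => emb1 (e0 i)) y1 i)) y2.
pose m i := emb4 (emb3 (B2 i)).
have hm0 : m ix0 = 1 by rewrite /m /B2 hB0 !rmorph1.
have hm123 : m ix1 * m ix2 = m ix3 by rewrite /m /B2 -!rmorphM hB123.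
have hquad := quad_from_tower (B2 := B2) i4.
have hEmul : forall f g, SP m predT f -> SP m predT g -> SP m predT (f * g).
  exact: (SP_mul c4 (iota := (emb4 \o emb3)) s2).
have [Q [P [hadm [hsq hsub] hBC h2]]] := main_abs c4 hm0 hm123 hquad hEmul typ hl.
exists L4, (FTe c4 s4 i4), Q, P; split => //.
- split => // hperf; have [y hy] := hperf y4.
  by apply: (x4_not_sqA c4 hm0 hquad); exists y.
- split => // k; have := hsq k; rewrite -[k ^+ 2]mulr1; exact.
Qed.
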